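(* For all positive integers $d$ and $k$ there exists a triangulation $T$ of the sphere $S^d$ such that $\Delta_{0,1}(T) \leq (d+1)(d^2+d+2)$, $|V(T)| = (d^2+d+1)k + (d+2)^2$, and $T$ has $k$ $d$-dimensional faces which are pairwise vertex-disjoint and nonadjacent. Consequently, for every $d$ there exists $L$ such that for every $k$ there is a triangulation $T$ of $S^d$ with $\Delta(T) \leq L$ and $|V(T)| \leq Lk$ which has $k$ $d$-dimensional faces $t_1,\dots,t_k$ that are pairwise vertex-disjoint and nonadjacent.
   Context: For a finite simplicial complex $X$, $\mathrm{skel}_k(X)$ is the set of $k$-dimensional faces, $\Delta_{i,j}(X) = \max_{\sigma \in \mathrm{skel}_i(X)} |\{\tau \in \mathrm{skel}_j(X) : \sigma \subseteq \tau\}|$, and $\Delta(X) = \max_{i,j}\Delta_{i,j}(X)$. Two faces are nonadjacent if there is no edge between a vertex of one and a vertex of the other. *)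

(* Defs.v *)
From HB Require Import structures.
From mathcomp Require Import all_boot all_order all_algebra.
From mathcomp Require Import all_classical all_reals all_analysis.
From mathcomp Require Import Rstruct Rstruct_topology.
Set Implicit Arguments. Unset Strict Implicit. Unset Printing Implicit Defensive.
Import Order.TTheory GRing.Theory Num.Theory.

Definition simplicial_complex (V : finType) (X : {set {set V}}) : Prop :=
  (@finset.set0 V) \notin X /\
  forall s t : {set V}, s \in X -> t \subset s -> t != @finset.set0 V -> t \in X.

Definition vertices (V : finType) (X : {set {set V}}) : {set V} :=
  [set v | [set v] \in X].

Definition skel (V : finType) (X : {set {set V}}) (k : nat) : {set {set V}} :=
  [set s in X | #|s| == k.+1].

Definition Delta_ij (V : finType) (X : {set {set V}}) (i j : nat) : nat :=
  \max_(s in skel X i) #|[set t in skel X j | s \subset t]|.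

(* Delta(X) = max_{i,j} Delta_{i,j}(X); indices beyond #|V| give 0. *)
Definition Delta (V : finType) (X : {set {set V}}) : nat :=
  \max_(i < #|V|.+1) \max_(j < #|V|.+1) Delta_ij X i j.

Definition nonadjacent (V : finType) (X : {set {set V}}) (s t : {set V}) : Prop :=
  forall x y, x \in s -> y \in t -> [set x; y] \notin skel X 1.

Local Open Scope ring_scope.
Local Open Scope classical_set_scope.

(* geometric realization of X, inside R^V (coordinates indexed via enum_rank) *)
Definition geom_realization (V : finType) (X : {set {set V}}) : set 'rV[Rdefinitions.R]_#|V| :=
  [set x | (forall i, 0 <= x ord0 i) /\ \sum_i x ord0 i = 1 /\
           exists2 s, s \in X & forall i, x ord0 i != 0 -> enum_val i \in s].

Definition sphere (d : nat) : set 'rV[Rdefinitions.R]_d.+1 :=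
  [set y | \sum_i (y ord0 i) ^+ 2 = 1].
Arguments sphere d : clear implicits.

Definition homeomorphic (m n : nat) (A : set 'rV[Rdefinitions.R]_m) (B : set 'rV[Rdefinitions.R]_n) : Prop :=
  exists (f : 'rV[Rdefinitions.R]_m -> 'rV[Rdefinitions.R]_n) (g : 'rV[Rdefinitions.R]_n -> 'rV[Rdefinitions.R]_m),
    {within A, continuous f} /\ {within B, continuous g} /\
    (forall x, A x -> B (f x)) /\ (forall y, B y -> A (g y)) /\
    (forall x, A x -> g (f x) = x) /\ (forall y, B y -> f (g y) = y).

Definition triangulation_of_sphere (d : nat) (V : finType) (X : {set {set V}}) : Prop :=
  simplicial_complex X /\ homeomorphic (geom_realization X) (sphere d).

(* Main.v *)
Set Warnings "-notation-overridden,-notation-incompatible-prefix,-ambiguous-paths".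
Require Import Defs.
From mathcomp Require Import all_boot all_order.
From HB Require Import structures.
From mathcomp Require Import all_algebra all_classical all_reals all_analysis Rstruct Rstruct_topology.
From mathcomp Require Import zify ring lra.
Import Order.TTheory GRing.Theory Num.Theory.
Set Implicit Arguments. Unset Strict Implicit. Unset Printing Implicit Defensive.

Section Homeo.
Local Open Scope classical_set_scope.

Lemma within_comp (T U W : topologicalType) (A : set T) (B : set U)
  (f : T -> U) (g : U -> W) :
  {within A, continuous f} -> {within B, continuous g} ->
  (forall x, A x -> B (f x)) -> {within A, continuous (g \o f)}.
Proof.
move=> cf cg fAB; apply/subspace_continuousP => x Ax.
have /subspace_continuousP cf' := cf; have /subspace_continuousP cg' := cg.
have h1 : f @ within A (nbhs x) --> within B (nbhs (f x)).
  move=> P /= HP.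
  have H1 : nbhs x [set y | A y -> B (f y) -> P (f y)] := cf' x Ax _ HP.
  change (nbhs x [set y | A y -> P (f y)]).
  by apply: filterS H1 => y H Ay; exact: H Ay (fAB y Ay).
move=> Q HQ; have H2 := cg' _ (fAB x Ax) Q HQ. change (nbhs x [set y | A y -> Q (g (f y))]). have := h1 _ H2. exact.
Qed.

Lemma homeo_trans m n p (A : set 'rV[Rdefinitions.R]_m) (B : set 'rV[Rdefinitions.R]_n)
  (C : set 'rV[Rdefinitions.R]_p) :
  homeomorphic A B -> homeomorphic B C -> homeomorphic A C.
Proof.
move=> [f1 [g1 [cf1 [cg1 [fAB [gBA [gf1 fg1]]]]]]].
move=> [f2 [g2 [cf2 [cg2 [fBC [gCB [gf2 fg2]]]]]]].
exists (f2 \o f1), (g1 \o g2); split; first exact: within_comp cf1 cf2 fAB.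
split; first exact: within_comp cg2 cg1 gCB.
split; first by move=> x Ax; apply: fBC; apply: fAB.
split; first by move=> y Cy; apply: gBA; apply: gCB.
split; first by move=> x Ax /=; rewrite gf2 ?gf1 //; apply: fAB.
by move=> y Cy /=; rewrite fg1 ?fg2 //; apply: gCB.
Qed.

Lemma homeo_sym m n (A : set 'rV[Rdefinitions.R]_m) (B : set 'rV[Rdefinitions.R]_n) :
  homeomorphic A B -> homeomorphic B A.
Proof.
move=> [f [g [cf [cg [fAB [gBA [gf fg]]]]]]].
by exists g, f; do !split.
Qed.

End Homeo.

Notation RR := Rdefinitions.R.

Section Cont.
Local Open Scope classical_set_scope.
Local Open Scope ring_scope.

Lemma cont_sum (T : topologicalType) (U : normedModType RR) (I : Type) (r : seq I)
  (P : pred I) (F : I -> T -> U) x :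
  (forall i, P i -> {for x, continuous (F i)}) ->
  {for x, continuous (fun y => \sum_(i <- r | P i) F i y)}.
Proof.
move=> cF; elim: r => [|i r IH].
  have -> : (fun y => \sum_(i <- [::] | P i) F i y) = (fun=> 0).
    by apply: funext => y; rewrite big_nil.
  exact: cvg_cst.
have -> : (fun y => \sum_(j <- i :: r | P j) F j y) =
  (fun y => (if P i then F i y else 0) + \sum_(j <- r | P j) F j y).
  by apply: funext => y /=; rewrite big_cons; case: (P i); rewrite ?add0r.
apply: continuousD => //; case Pi: (P i); first exact: cF.
exact: cvg_cst.
Qed.

Lemma cont_min (T : topologicalType) (I : Type) (r : seq I)
  (P : pred I) (F : I -> T -> RR) (x0 : RR) x :
  (forall i, P i -> {for x, continuous (F i)}) ->
  {for x, continuous (fun y => \big[Order.min/x0]_(i <- r | P i) F i y)}.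
Proof.
move=> cF; elim: r => [|i r IH].
  have -> : (fun y => \big[Order.min/x0]_(i <- [::] | P i) F i y) = (fun=> x0).
    by apply: funext => y; rewrite big_nil.
  exact: cvg_cst.
case Pi: (P i).
  have -> : (fun y => \big[Order.min/x0]_(j <- i :: r | P j) F j y) =
    (F i \min (fun y => \big[Order.min/x0]_(j <- r | P j) F j y)).
    by apply: funext => y /=; rewrite big_cons Pi.
  by apply: continuous_min => //; exact: cF.
have -> : (fun y => \big[Order.min/x0]_(j <- i :: r | P j) F j y) =
  (fun y => \big[Order.min/x0]_(j <- r | P j) F j y).
  by apply: funext => y /=; rewrite big_cons Pi.
exact: IH.
Qed.

Lemma mx_cont_at (T : topologicalType) m n (f : T -> 'M[RR]_(m,n)) x :
  (forall i j, {for x, continuous (fun y => f y i j)}) -> {for x, continuous f}.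
Proof.
move=> cf.
have -> : f = (fun y => \sum_(i < m) \sum_(j < n) f y i j *: delta_mx i j).
  by apply: funext => y; rewrite -matrix_sum_delta.
apply: cont_sum => i _; apply: cont_sum => j _.
by apply: continuousZr_tmp; exact: cf.
Qed.

End Cont.

Section Coord.
Variable V : finType.
Local Open Scope classical_set_scope.
Local Open Scope ring_scope.

Definition crd (x : 'rV[RR]_#|V|) (v : V) : RR := x ord0 (enum_rank v).
Definition mkrow (h : V -> RR) : 'rV[RR]_#|V| := \row_i h (enum_val i).

Lemma coord_mkrow h v : crd (mkrow h) v = h v.
Proof. by rewrite /crd /mkrow mxE enum_rankK. Qed.

Lemma coord_inj (x y : 'rV[RR]_#|V|) : (forall v, crd x v = crd y v) -> x = y.
Proof.
move=> H; apply/rowP => i; have := H (enum_val i).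
by rewrite /crd enum_valK.
Qed.

Lemma sum_coord (x : 'rV[RR]_#|V|) : \sum_i x ord0 i = \sum_v crd x v.
Proof.
rewrite (reindex (@enum_rank V)) //; apply: onW_bij; exact: enum_rank_bij.
Qed.

Lemma realP (X : {set {set V}}) (x : 'rV[RR]_#|V|) : geom_realization X x <->
  [/\ forall v, 0 <= crd x v, \sum_v crd x v = 1 &
      exists2 s, s \in X & forall v, crd x v != 0 -> v \in s].
Proof.
rewrite /geom_realization /= sum_coord; split.
  move=> [H0 [H1 [s Hs H2]]]; split => //.
    by move=> v; exact: H0.
  exists s => // v; rewrite /crd => /H2; by rewrite enum_rankK.
move=> [H0 H1 [s Hs H2]]; split.
  by move=> i; have := H0 (enum_val i); rewrite /crd enum_valK.
split => //; exists s => // i Hi; rewrite -(enum_valK i) in Hi; exact: H2.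
Qed.

Lemma coord_cont v : continuous (fun x => crd x v).
Proof. move=> x; exact: (@coord_continuous RR 1 #|V| ord0 (enum_rank v)). Qed.

End Coord.

Lemma card_ordP K (P : pred nat) : #|[set u : 'I_K | P u]| = count P (iota 0 K).
Proof.
rewrite cardsE cardE -val_enum_ord count_map -size_filter.
by rewrite enumT /enum_mem.
Qed.

Lemma count_int lo hi K : hi <= K -> lo <= hi ->
  count (fun u => (lo <= u) && (u < hi)) (iota 0 K) = hi - lo.
Proof.
move=> hK lh.
have -> : K = lo + ((hi - lo) + (K - hi)) by lia.
rewrite !iotaD !count_cat add0n.
rewrite (@eq_in_count _ _ pred0); last by move=> u; rewrite mem_iota => /andP[_ H]; apply/negbTE; lia.
rewrite (@eq_in_count _ (fun u => (lo <= u) && (u < hi)) predT (iota lo (hi - lo))); last first.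
  by move=> u; rewrite mem_iota => /andP[H1 H2]; apply/andP; split; lia.
rewrite (@eq_in_count _ _ pred0 (iota (lo + (hi - lo)) _)); last first.
  by move=> u; rewrite mem_iota => /andP[H1 H2]; apply/negbTE; lia.
by rewrite !count_pred0 count_predT size_iota; lia.
Qed.

Lemma card_int K lo hi : hi <= K -> lo <= hi ->
  #|[set u : 'I_K | (lo <= u) && (u < hi)]| = hi - lo.
Proof. by move=> *; rewrite (card_ordP K (fun u => (lo <= u) && (u < hi))) count_int. Qed.

Lemma card_int_le K lo hi : lo <= hi ->
  #|[set u : 'I_K | (lo <= u) && (u < hi)]| <= hi - lo.
Proof.
move=> lh; rewrite (card_ordP K (fun u => (lo <= u) && (u < hi))).
have -> : hi - lo = count (fun u => (lo <= u) && (u < hi)) (iota 0 (K + hi)).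
  by rewrite count_int //; lia.
by rewrite iotaD count_cat leq_addr.
Qed.

Local Open Scope ring_scope.
Lemma bigmin_attained (I : finType) (P : pred I) (F : I -> RR) x0 j :
  P j -> (forall i, P i -> F i <= x0) ->
  exists2 i, P i & \big[Order.min/x0]_(i | P i) F i = F i.
Proof.
move=> Pj H; exists [arg min_(i < j | P i) F i]%O; last exact: bigmin_eq_arg.
by case: arg_minP.
Qed.

Definition stellar (V : finType) (X : {set {set V}}) (s : {set V}) (w : V) :
  {set {set V}} :=
  [set t in X | t != s] :|: [set w |: r | r in powerset s :\ s].

Section Stellar.
Variables (V : finType) (X : {set {set V}}) (s : {set V}) (w : V).
Hypothesis Hs : s \in X.
Hypothesis Hmax : forall t, t \in X -> s \subset t -> t = s.
Hypothesis Hcard : (1 < #|s|)%N.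
Hypothesis Hw : forall t, t \in X -> w \notin t.

Local Open Scope classical_set_scope.
Local Open Scope ring_scope.

Lemma wNs : w \notin s. Proof. exact: Hw. Qed.

Lemma stellarP t : t \in stellar X s w <->
  (t \in X /\ t != s) \/ exists2 r : {set V}, r \subset s /\ r != s & t = w |: r.
Proof.
rewrite /stellar !inE; split.
  case/orP => [/andP[H1 H2]|/imsetP[r]]; first by left.
  rewrite !inE => /andP[H1 H2] ->; right; exists r => //.
case => [[-> ->] //|[r [H1 H2] ->]]; apply/orP; right.
by apply: imset_f; rewrite !inE H1 H2.
Qed.

Definition kk : RR := (#|s|)%:R.
Lemma kk_gt0 : 0 < kk.
Proof. by rewrite /kk ltr0n; apply: leq_trans Hcard. Qed.
Lemma kk_ge2 : 2 <= kk.
Proof. by rewrite /kk (ler_nat RR 2). Qed.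

Definition cc (u : V) : RR := if u == w then kk else if u \in s then -1 else 0.
Definition cc' (u : V) : RR := if u == w then -1 else if u \in s then kk^-1 else 0.
Definition mm (y : 'rV[RR]_#|V|) : RR := \big[Order.min/1]_(v in s) crd y v.
Definition FF (y : 'rV[RR]_#|V|) := y + mm y *: mkrow cc.
Definition GG (x : 'rV[RR]_#|V|) := x + crd x w *: mkrow cc'.

Lemma coordD (x y : 'rV[RR]_#|V|) u : crd (x + y) u = crd x u + crd y u.
Proof. by rewrite /crd mxE. Qed.
Lemma coordZ a (x : 'rV[RR]_#|V|) u : crd (a *: x) u = a * crd x u.
Proof. by rewrite /crd mxE. Qed.

Lemma coordFF y u : crd (FF y) u = crd y u + mm y * cc u.
Proof. by rewrite /FF coordD coordZ coord_mkrow. Qed.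
Lemma coordGG x u : crd (GG x) u = crd x u + crd x w * cc' u.
Proof. by rewrite /GG coordD coordZ coord_mkrow. Qed.

Lemma cc_cc' u : cc u + kk * cc' u = 0.
Proof.
have k0 := kk_gt0.
rewrite /cc /cc'; case: (u == w); first by rewrite mulrN1 subrr.
case: (u \in s); last by rewrite mulr0 addr0.
by rewrite mulfV ?addNr // gt_eqF.
Qed.

Lemma sum_ind (a : RR) : \sum_u (if u \in s then a else 0) = kk * a.
Proof. by rewrite -big_mkcond /= sumr_const /kk mulr_natl. Qed.

Lemma cc_split u : cc u = (if u == w then kk else 0) + (if u \in s then -1 else 0).
Proof.
rewrite /cc; case: eqP => [->|_]; last by rewrite add0r.
by rewrite (negbTE wNs) addr0.
Qed.

Lemma cc'_split u : cc' u = (if u == w then -1 else 0) + (if u \in s then kk^-1 else 0).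
Proof.
rewrite /cc'; case: eqP => [->|_]; last by rewrite add0r.
by rewrite (negbTE wNs) addr0.
Qed.

Lemma sum_pt (a : RR) : \sum_u (if u == w then a else 0) = a.
Proof. by rewrite -big_mkcond /= big_pred1_eq. Qed.

Lemma sum_cc : \sum_u cc u = 0.
Proof.
under eq_bigr => u _ do rewrite cc_split.
by rewrite big_split /= sum_pt sum_ind mulrN1 subrr.
Qed.

Lemma sum_cc' : \sum_u cc' u = 0.
Proof.
under eq_bigr => u _ do rewrite cc'_split.
rewrite big_split /= sum_pt sum_ind mulfV ?addNr //.
by have := kk_gt0; rewrite lt0r => /andP[].
Qed.

Lemma mm_ge0 y : (forall v, 0 <= crd y v) -> 0 <= mm y.
Proof. by move=> H; apply: le_bigmin => // v _; exact: H. Qed.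

Lemma mm_le y v : v \in s -> mm y <= crd y v.
Proof. by move=> vs; exact: bigmin_le_cond. Qed.

Lemma crd_le1 (y : 'rV[RR]_#|V|) v : (forall u, 0 <= crd y u) ->
  \sum_u crd y u = 1 -> crd y v <= 1.
Proof.
move=> H0 H1; rewrite -H1 (bigD1 v) //= lerDl.
by apply: sumr_ge0 => u _; exact: H0.
Qed.

Lemma s_nonempty : exists v, v \in s.
Proof. by apply/set0Pn; rewrite -card_gt0; apply: leq_trans Hcard. Qed.

Lemma mm_att y : (forall v, crd y v <= 1) -> exists2 v, v \in s & mm y = crd y v.
Proof.
move=> H; have [j js] := s_nonempty.
have [v vs E] := @bigmin_attained V (mem s) (crd y) 1 j js (fun i _ => H i).
by exists v => //; exact: E.
Qed.

Lemma kk_neq0 : kk != 0.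
Proof. by have := kk_gt0; rewrite lt0r => /andP[]. Qed.

Lemma FF_real y : geom_realization X y -> geom_realization (stellar X s w) (FF y).
Proof.
move/realP=> [H0 H1 [t Ht Hsupp]].
have yw : crd y w = 0.
  by apply/eqP; apply: contraNT (Hw Ht) => /Hsupp.
have [v0 v0s mmv0] := mm_att (fun v => crd_le1 v H0 H1).
have mm0 := mm_ge0 H0.
apply/realP; split.
- move=> u; rewrite coordFF /cc; case: eqP => [->|_].
    by rewrite yw add0r; apply: mulr_ge0 => //; exact: ltW kk_gt0.
  case: ifP => us; last by rewrite mulr0 addr0.
  by rewrite mulrN1 subr_ge0; exact: mm_le.
- under eq_bigr do rewrite coordFF.
  by rewrite big_split /= -mulr_sumr sum_cc mulr0 addr0.
- case: (eqVneq t s) => [ets|nts].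
    exists (w |: (s :\ v0)).
      apply/stellarP; right; exists (s :\ v0) => //; split; first exact: subsetDl.
      by apply/eqP => E; move: v0s; rewrite -E !inE eqxx.
    move=> u; rewrite coordFF /cc; case: (eqVneq u w) => [-> _|uw]; first by rewrite setU11.
    case: ifP => us.
      rewrite mulrN1 !inE (negbTE uw) us andbT /=; apply: contraNN => /eqP ->.
      by rewrite mmv0 subrr.
    by rewrite mulr0 addr0 => /Hsupp; rewrite ets us.
  have mmz : mm y = 0.
    have : ~~ (s \subset t) by apply/negP => /(Hmax Ht) E; move: nts; rewrite E eqxx.
    case/subsetPn => v vs vt.
    have yv : crd y v = 0 by apply/eqP; apply: contraNT vt => /Hsupp.
    by apply: le_anti; rewrite mm0 andbT -yv; exact: mm_le.
  exists t; first by apply/stellarP; left.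
  by move=> u; rewrite coordFF mmz mul0r addr0; exact: Hsupp.
Qed.

Lemma GG_FF y : geom_realization X y -> GG (FF y) = y.
Proof.
move/realP=> [H0 H1 [t Ht Hsupp]].
have yw : crd y w = 0.
  by apply/eqP; apply: contraNT (Hw Ht) => /Hsupp.
apply: coord_inj => u; rewrite coordGG !coordFF yw add0r {2}/cc eqxx.
by rewrite -addrA -mulrA -mulrDr cc_cc' mulr0 addr0.
Qed.

Lemma real'_zero x : geom_realization (stellar X s w) x ->
  exists2 v, v \in s & crd x v = 0.
Proof.
move/realP=> [H0 H1 [t Ht Hsupp]].
suff [v vs vt] : exists2 v, v \in s & v \notin t.
  by exists v => //; apply/eqP; apply: contraNT vt => /Hsupp.
case/stellarP: Ht => [[Ht nts]|[r [rs nrs] ->]].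
  have : ~~ (s \subset t) by apply/negP => /(Hmax Ht) E; move: nts; rewrite E eqxx.
  by case/subsetPn => v vs vt; exists v.
have : ~~ (s \subset r) by apply/negP => H; move: nrs; rewrite finset.eqEsubset rs H.
case/subsetPn => v vs vr; exists v => //; rewrite !inE negb_or vr andbT.
by apply: contraNN wNs => /eqP <-.
Qed.

Lemma GG_real x : geom_realization (stellar X s w) x -> geom_realization X (GG x).
Proof.
move=> Hx; move/realP: (Hx) => [H0 H1 [t Ht Hsupp]].
apply/realP; split.
- move=> u; rewrite coordGG /cc'; case: eqP => [->|_]; first by rewrite mulrN1 subrr.
  case: ifP => us; last by rewrite mulr0 addr0.
  by apply: addr_ge0 => //; apply: mulr_ge0 => //; rewrite invr_ge0; exact: ltW kk_gt0.
- under eq_bigr do rewrite coordGG.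
  by rewrite big_split /= -mulr_sumr sum_cc' mulr0 addr0.
- case/stellarP: Ht => [[Ht nts]|[r [rs nrs] ett]].
    have xw : crd x w = 0 by apply/eqP; apply: contraNT (Hw Ht) => /Hsupp.
    by exists t => // u; rewrite coordGG xw mul0r addr0; exact: Hsupp.
  exists s => // u; rewrite coordGG /cc'; case: (eqVneq u w) => [->|uw].
    by rewrite mulrN1 subrr eqxx.
  case: ifP => // us; rewrite mulr0 addr0 => /Hsupp; rewrite ett !inE (negbTE uw) /=.
  by move/(fintype.subsetP rs); rewrite us.
Qed.

Lemma FF_GG x : geom_realization (stellar X s w) x -> FF (GG x) = x.
Proof.
move=> Hx; have [v0 v0s xv0] := real'_zero Hx.
move/realP: (Hx) => [H0 H1 _].
have xw1 := crd_le1 w H0 H1.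
have k1 : 1 <= kk by apply: le_trans kk_ge2; rewrite ler1n.
have xk0 : 0 <= crd x w / kk by apply: divr_ge0 => //; exact: ltW kk_gt0.
have mmG : mm (GG x) = crd x w / kk.
  apply: le_anti; apply/andP; split.
    apply: le_trans (mm_le _ v0s) _.
    by rewrite coordGG xv0 add0r /cc' v0s; case: eqP => [E|_] //; move: v0s; rewrite E (negbTE wNs).
  apply: le_bigmin => [|v vs].
    by rewrite ler_pdivrMr ?kk_gt0 // mul1r; apply: le_trans xw1 k1.
  rewrite coordGG /cc' vs; case: eqP => [E|_]; first by move: vs; rewrite E (negbTE wNs).
  by rewrite lerDr.
apply: coord_inj => u; rewrite coordFF coordGG mmG.
have := cc_cc' u; have kn := kk_neq0.
move=> E.
have -> : cc u = - (kk * cc' u) by apply/eqP; rewrite -addr_eq0 E.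
by field.
Qed.

Lemma FF_cont : continuous FF.
Proof.
have -> : FF = ((fun y => y) + (fun y => mm y *: mkrow cc)) by [].
move=> y; apply: continuousD; first exact: cvg_id.
apply: continuousZr_tmp; apply: cont_min => v _; exact: coord_cont.
Qed.

Lemma GG_cont : continuous GG.
Proof.
have -> : GG = ((fun y => y) + (fun y => crd y w *: mkrow cc')) by [].
move=> y; apply: continuousD; first exact: cvg_id.
apply: continuousZr_tmp; exact: coord_cont.
Qed.

Lemma stellar_homeo :
  homeomorphic (geom_realization (stellar X s w)) (geom_realization X).
Proof.
exists GG, FF; split; first exact: continuous_subspaceT GG_cont.
split; first exact: continuous_subspaceT FF_cont.
split; first exact: GG_real.
split; first exact: FF_real.
split; first exact: FF_GG.
exact: GG_FF.
Qed.

Lemma stellar_simplicial : simplicial_complex X -> simplicial_complex (stellar X s w).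
Proof.
move=> [H0 Hcl]; split.
  apply/negP => /stellarP [[H _]|[r _ E]]; first by rewrite H in H0.
  by move: (setU11 w r); rewrite -E inE.
move=> a b /stellarP Ha ba nb; apply/stellarP.
have notsr : forall r : {set V}, r \subset s -> r != s -> ~~ (s \subset r).
  by move=> r rs nrs; apply/negP => H; move: nrs; rewrite finset.eqEsubset rs H.
case: Ha => [[Ha nas]|[r [rs nrs] E]].
  left; split; first exact: Hcl Ha ba nb.
  apply/negP => /eqP E; subst b; move: nas; by rewrite (Hmax Ha ba) eqxx.
have br : forall u, u \in b -> u != w -> u \in r.
  move=> u ub uw; have := fintype.subsetP ba u ub; rewrite E !inE (negbTE uw) //.
case: (boolP (w \in b)) => wb.
  right; exists (b :\ w); last by rewrite finset.setD1K.
  have H : b :\ w \subset r.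
    by apply/fintype.subsetP => u; rewrite !inE => /andP[uw ub]; exact: br.
  split; first exact: fintype.subset_trans H rs.
  apply/negP => /eqP E'; move: (notsr r rs nrs); by rewrite -E' H.
have H : b \subset r.
  apply/fintype.subsetP => u ub; apply: br => //; apply/negP => /eqP E'.
  by move: wb; rewrite -E' ub.
left; split; first exact: Hcl Hs (fintype.subset_trans H rs) nb.
apply/negP => /eqP E'; move: (notsr r rs nrs); by rewrite -E' H.
Qed.

End Stellar.

Local Open Scope ring_scope.

Lemma bigmin_cases (I : finType) (P : pred I) (F : I -> RR) x0 :
  \big[Order.min/x0]_(i | P i) F i = x0 \/
  exists2 i, P i & \big[Order.min/x0]_(i | P i) F i = F i.
Proof.
apply: (@big_ind _ (fun r => r = x0 \/ exists2 i, P i & r = F i)); first by left.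
  move=> x y Hx Hy; case: (leP x y) => _; [exact: Hx | exact: Hy].
by move=> i Pi; right; exists i.
Qed.

Section Base.
Variables (V : finType) (d : nat) (a : 'I_d.+2 -> V).
Hypothesis ainj : injective a.

Definition S0 : {set V} := [set a i | i in 'I_d.+2].
Definition X0 : {set {set V}} := [set t : {set V} | (t != finset.set0) && (t \proper S0)].

Definition lo (j : 'I_d.+1) : 'I_d.+2 := lift ord_max j.
Definition uvec (x : 'rV[RR]_#|V|) : 'rV[RR]_d.+1 :=
  \row_(j < d.+1) (crd x (a (lo j)) - crd x (a ord_max)).
Definition nrm (u : 'rV[RR]_d.+1) : RR := Num.sqrt (\sum_j u ord0 j ^+ 2).
Definition fB (x : 'rV[RR]_#|V|) : 'rV[RR]_d.+1 := (nrm (uvec x))^-1 *: uvec x.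
Definition mz (z : 'rV[RR]_d.+1) : RR := \big[Order.min/0]_(j < d.+1) z ord0 j.
Definition ccB (z : 'rV[RR]_d.+1) (i : 'I_d.+2) : RR :=
  (if unlift ord_max i is Some j then z ord0 j else 0) - mz z.
Definition ssB z := \sum_(i < d.+2) ccB z i.
Definition gB (z : 'rV[RR]_d.+1) : 'rV[RR]_#|V| :=
  mkrow (fun v => if [pick i | a i == v] is Some i then ccB z i / ssB z else 0).

Lemma ccB_lo z j : ccB z (lo j) = z ord0 j - mz z.
Proof. by rewrite /ccB /lo liftK. Qed.
Lemma ccB_max z : ccB z ord_max = - mz z.
Proof. by rewrite /ccB unlift_none add0r. Qed.

Lemma pick_a i : [pick j | a j == a i] = Some i.
Proof.
case: pickP => [j /eqP /ainj -> //|H].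
by have := H i; rewrite eqxx.
Qed.

Lemma pick_notS v : v \notin S0 -> [pick j | a j == v] = None.
Proof.
move=> vS; case: pickP => [j /eqP E|//].
by move: vS; rewrite -E imset_f.
Qed.

Lemma sum_S0 (h : V -> RR) : (forall v, v \notin S0 -> h v = 0) ->
  \sum_v h v = \sum_i h (a i).
Proof.
move=> H; rewrite (bigID (mem S0)) /= [X in _ + X]big1 ?addr0; last first.
  by move=> v vS; exact: H.
rewrite /S0 big_imset //=; move=> i j _ _; exact: ainj.
Qed.

Lemma real0P x : geom_realization X0 x ->
  [/\ forall v, 0 <= crd x v, \sum_i crd x (a i) = 1,
      forall v, v \notin S0 -> crd x v = 0 & exists j, crd x (a j) = 0].
Proof.
move/realP=> [H0 H1 [t Ht Hs]].
move: Ht; rewrite inE => /andP[tn tp].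
have Hout : forall v, v \notin t -> crd x v = 0.
  by move=> v vt; apply/eqP; apply: contraNT vt; exact: Hs.
have Hout' : forall v, v \notin S0 -> crd x v = 0.
  move=> v vS; apply: Hout; apply: contraNN vS.
  by apply: (fintype.subsetP (proper_sub tp)).
split => //; first by rewrite -sum_S0.
case/fintype.properP: tp => _ [v vS vt].
move: vS => /imsetP [j _ E]; exists j; rewrite -E; exact: Hout.
Qed.

Lemma mz_le0 z : mz z <= 0.
Proof. exact: bigmin_le_id. Qed.
Lemma mz_le z j : mz z <= z ord0 j.
Proof. exact: bigmin_le_cond. Qed.

Lemma ccB_ge0 z i : 0 <= ccB z i.
Proof.
case: (unliftP ord_max i) => [j ->|->].
  by rewrite -/(lo j) ccB_lo subr_ge0 mz_le.
by rewrite ccB_max oppr_ge0 mz_le0.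
Qed.

Lemma ssB_gt0 z : sphere d z -> 0 < ssB z.
Proof.
rewrite /sphere /= => Hz; rewrite lt0r sumr_ge0 ?andbT; last by move=> i _; exact: ccB_ge0.
apply/negP => /eqP /psumr_eq0P H.
have H' : forall i, ccB z i = 0 by move=> i; apply: H => // i' _; exact: ccB_ge0.
have mz0 : mz z = 0 by apply/eqP; rewrite -oppr_eq0 -ccB_max H'.
have zj : forall j, z ord0 j = 0 by move=> j; have := H' (lo j); rewrite ccB_lo mz0 subr0.
move: Hz; rewrite big1 => [/eqP|j _]; first by rewrite eq_sym oner_eq0.
by rewrite zj expr0n.
Qed.

Lemma ccB_zero z : exists i, ccB z i = 0.
Proof.
case: (bigmin_cases (fun j : 'I_d.+1 => true) (fun j => z ord0 j) 0) => [E|[j _ E]].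
  by exists ord_max; rewrite ccB_max /mz E oppr0.
by exists (lo j); rewrite ccB_lo /mz E subrr.
Qed.

Lemma gB_crd z i : crd (gB z) (a i) = ccB z i / ssB z.
Proof. by rewrite /gB coord_mkrow pick_a. Qed.
Lemma gB_out z v : v \notin S0 -> crd (gB z) v = 0.
Proof. by move=> vS; rewrite /gB coord_mkrow pick_notS. Qed.

Lemma gB_real z : sphere d z -> geom_realization X0 (gB z).
Proof.
move=> Hz; have ss0 := ssB_gt0 Hz.
apply/realP; split.
- move=> v; rewrite /gB coord_mkrow; case: pickP => [i _|_] //.
  by apply: divr_ge0; [exact: ccB_ge0 | exact: ltW].
- rewrite (sum_S0 (gB_out z)); under eq_bigr do rewrite gB_crd.
  by rewrite -mulr_suml mulfV // gt_eqF.
- have [i0 Hi0] := ccB_zero z.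
  exists (S0 :\ a i0).
    rewrite inE properD1 ?andbT; last by rewrite imset_f.
    apply/set0Pn; exists (a (if i0 == ord0 then ord_max else ord0)).
    have ni : (if i0 == ord0 then ord_max else ord0) != i0.
      case: (eqVneq i0 ord0) => [->|ne]; last by rewrite eq_sym.
      by apply/eqP => E; have := congr1 val E.
    rewrite !inE imset_f // andbT; apply: contraNN ni => /eqP /ainj ->.
    by [].
  move=> v; case: (boolP (v \in S0)) => [vS|vS]; last by rewrite gB_out ?eqxx.
  move: (vS) => /imsetP [i _ ->]; rewrite gB_crd !inE imset_f // andbT.
  by apply: contraNN => /eqP /ainj ->; rewrite Hi0 mul0r.
Qed.

Lemma uvec_gB z : uvec (gB z) = (ssB z)^-1 *: z.
Proof.
apply/rowP => j; rewrite !mxE !gB_crd ccB_lo ccB_max.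
by rewrite -mulrBl opprK subrK mulrC.
Qed.

Lemma fB_gB z : sphere d z -> fB (gB z) = z.
Proof.
move=> Hz; have ss0 := ssB_gt0 Hz.
rewrite /fB uvec_gB /nrm.
have -> : \sum_j ((ssB z)^-1 *: z) ord0 j ^+ 2 = (ssB z)^-1 ^+ 2.
  under eq_bigr do rewrite mxE exprMn.
  by rewrite -mulr_sumr Hz mulr1.
rewrite sqrtr_sqr ger0_norm ?invr_ge0 ?ltW // invrK scalerA mulfV ?gt_eqF //.
by rewrite scale1r.
Qed.

Lemma nrm_gt0 x : geom_realization X0 x -> 0 < \sum_j uvec x ord0 j ^+ 2.
Proof.
move=> /real0P [H0 H1 Hout [j0 Hj0]].
rewrite lt0r sumr_ge0 ?andbT; last by move=> j _; exact: sqr_ge0.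
apply/negP => /eqP /psumr_eq0P H.
have E : forall j, crd x (a (lo j)) = crd x (a ord_max).
  move=> j; have := H (fun i _ => sqr_ge0 _) j isT => /eqP; rewrite sqrf_eq0 mxE subr_eq0.
  by move/eqP.
have Emax : crd x (a ord_max) = 0.
  by case: (unliftP ord_max j0) Hj0 => [j ->|->] //; rewrite -/(lo j) E.
move: H1; rewrite big1 => [/eqP|i _]; first by rewrite eq_sym oner_eq0.
by case: (unliftP ord_max i) => [j ->|->] //; rewrite -/(lo j) E.
Qed.

Lemma fB_sphere x : geom_realization X0 x -> sphere d (fB x).
Proof.
move=> Hx; have Q0 := nrm_gt0 Hx; rewrite /sphere /= /fB /nrm.
under eq_bigr do rewrite mxE exprMn.
rewrite -mulr_sumr exprVn sqr_sqrtr ?ltW // mulVf //; by rewrite gt_eqF.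
Qed.

Lemma gB_fB x : geom_realization X0 x -> gB (fB x) = x.
Proof.
move=> Hx; have Q0 := nrm_gt0 Hx.
move: (Hx) => /real0P [H0 H1 Hout [j0 Hj0]].
set N := nrm (uvec x).
have N0 : 0 < N by rewrite /N /nrm sqrtr_gt0.
have zj : forall j, fB x ord0 j = N^-1 * (crd x (a (lo j)) - crd x (a ord_max)).
  by move=> j; rewrite /fB !mxE.
have N'0 : 0 < N^-1 by rewrite invr_gt0.
have mzE : mz (fB x) = - (N^-1 * crd x (a ord_max)).
  apply: le_anti; apply/andP; split.
    case: (unliftP ord_max j0) Hj0 => [j ->|->] Hj.
      by apply: le_trans (mz_le _ j) _; rewrite zj -/(lo j) Hj sub0r mulrN.
    by rewrite Hj mulr0 oppr0 mz_le0.
  apply: le_bigmin => [|j _].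
    by rewrite oppr_le0; apply: mulr_ge0 => //; exact: ltW.
  rewrite zj mulrBr; have := mulr_ge0 (ltW N'0) (H0 (a (lo j))); lra.
have ccE : forall i, ccB (fB x) i = N^-1 * crd x (a i).
  move=> i; case: (unliftP ord_max i) => [j ->|->].
    by rewrite -/(lo j) ccB_lo mzE zj opprK mulrBr subrK.
  by rewrite ccB_max mzE opprK.
have ssE : ssB (fB x) = N^-1.
  by rewrite /ssB; under eq_bigr do rewrite ccE; rewrite -mulr_sumr H1 mulr1.
apply: coord_inj => v; case: (boolP (v \in S0)) => [vS|vS]; last by rewrite gB_out // Hout.
move: vS => /imsetP [i _ ->]; rewrite gB_crd ccE ssE mulrC mulrA mulVf ?mul1r //.
by rewrite gt_eqF.
Qed.

Lemma uvec_cont : continuous uvec.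
Proof.
move=> y; apply: mx_cont_at => i j.
have -> : (fun y => uvec y i j) =
  ((fun y => crd y (a (lo j))) - (fun y => crd y (a ord_max))).
  by apply: funext => y'; rewrite /uvec mxE.
by apply: (@continuousB RR RR^o); exact: coord_cont.
Qed.

Lemma sumsq_cont (f : 'rV[RR]_#|V| -> 'rV[RR]_d.+1) x : {for x, continuous f} ->
  {for x, continuous (fun y => \sum_j f y ord0 j ^+ 2)}.
Proof.
move=> cf; apply: (@cont_sum _ RR^o) => j _.
have cj : {for x, continuous (fun y => f y ord0 j)}.
  exact: (@continuous_comp _ _ _ f (fun M : 'rV[RR]_d.+1 => M ord0 j) x cf (@coord_continuous RR 1 d.+1 ord0 j (f x))).
have -> : (fun y => f y ord0 j ^+ 2) = ((fun y => f y ord0 j) \* (fun y => f y ord0 j)).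
  by apply: funext => y; rewrite expr2.
exact: continuousM.
Qed.

Lemma nrm_cont x : {for x, continuous (fun y => nrm (uvec y))}.
Proof.
apply: (@continuous_comp _ _ _ (fun y => \sum_j uvec y ord0 j ^+ 2) Num.sqrt).
  by apply: sumsq_cont; exact: uvec_cont.
exact: sqrt_continuous.
Qed.

Lemma fB_cont_at x : geom_realization X0 x -> {for x, continuous fB}.
Proof.
move=> Hx; have Q0 := nrm_gt0 Hx.
apply: continuousZ; last exact: uvec_cont.
apply: continuousV; last exact: nrm_cont.
by rewrite /nrm gt_eqF // sqrtr_gt0.
Qed.

Lemma mz_cont z : {for z, continuous mz}.
Proof.
apply: cont_min => j _; exact: coord_continuous.
Qed.

Lemma ccB_cont z i : {for z, continuous (fun z => ccB z i)}.
Proof.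
rewrite /ccB; case: (unlift ord_max i) => [j|].
  have -> : (fun z : 'rV[RR]_d.+1 => z ord0 j - mz z) =
    ((fun z : 'rV[RR]_d.+1 => z ord0 j) - (mz : 'rV[RR]_d.+1 -> RR^o)) by [].
  by apply: (@continuousB RR RR^o); [exact: coord_continuous | exact: mz_cont].
have -> : (fun z : 'rV[RR]_d.+1 => 0 - mz z) =
  ((fun=> 0 : RR^o) - (mz : 'rV[RR]_d.+1 -> RR^o)) by [].
apply: (@continuousB RR RR^o); last exact: mz_cont.
exact: (@cvg_cst _ (0 : RR^o) _ (nbhs z) _).
Qed.

Lemma gB_cont_at z : sphere d z -> {for z, continuous gB}.
Proof.
move=> Hz; have ss0 := ssB_gt0 Hz.
apply: mx_cont_at => i j.
have -> : (fun z => gB z i j) = (fun z => if [pick k | a k == enum_val j] is Some k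
    then ccB z k / ssB z else 0).
  by apply: funext => z'; rewrite /gB /mkrow mxE.
case: pickP => [k _|_]; last exact: (@cvg_cst _ (0 : RR) _ (nbhs z) _).
have -> : (fun z => ccB z k / ssB z) = ((fun z => ccB z k) \* (fun z => (ssB z)^-1)) by [].
apply: continuousM; first exact: ccB_cont.
apply: continuousV; first by rewrite gt_eqF.
by apply: (@cont_sum _ RR^o) => i' _; exact: ccB_cont.
Qed.

Lemma base_homeo : homeomorphic (geom_realization X0) (sphere d).
Proof.
exists fB, gB; split.
  by apply: continuous_in_subspaceT => x; rewrite inE => Hx; exact: fB_cont_at.
split.
  by apply: continuous_in_subspaceT => x; rewrite inE => Hx; exact: gB_cont_at.
split; first exact: fB_sphere.
split; first exact: gB_real.
split; first exact: gB_fB.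
exact: fB_gB.
Qed.

End Base.

Close Scope ring_scope.

Lemma X0_simplicial (V : finType) (d : nat) (a : 'I_d.+2 -> V) :
  simplicial_complex (X0 a).
Proof.
split; first by rewrite inE eqxx.
move=> s t; rewrite !inE => /andP[_ sp] ts tn; rewrite tn /=.
exact: sub_proper_trans ts sp.
Qed.

Section Stack.
Variables (d N : nat).
Hypothesis Hd : 0 < d.
Hypothesis HdN : d.+2 <= N.+1.

Definition aa (i : 'I_d.+2) : 'I_N.+1 := widen_ord HdN i.
Lemma aa_inj : injective aa.
Proof. by move=> i j H; apply: val_inj; exact: (congr1 val H). Qed.

Lemma S0E u : (u \in S0 aa) = (u < d.+2).
Proof.
apply/imsetP/idP => [[i _ ->]|H]; first by rewrite /= ltn_ord.
by exists (Ordinal H) => //; apply: val_inj.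
Qed.

Lemma card_S0 : #|S0 aa| = d.+2.
Proof. by rewrite card_imset ?card_ord //; exact: aa_inj. Qed.

Definition sig m : {set 'I_N.+1} := [set u : 'I_N.+1 | (m - d.+1 <= u) && (u < m)].
Definition Tc c : {set 'I_N.+1} :=
  [set u : 'I_N.+1 | (c - d.+1 <= u) && (u <= c) && (u != c.-1 :> nat)].

Fixpoint stk j : {set {set 'I_N.+1}} :=
  if j is j'.+1 then stellar (stk j') (sig (d.+2 + j')) (inord (d.+2 + j')) else X0 aa.

Lemma card_sig m : d.+1 <= m <= N.+1 -> #|sig m| = d.+1.
Proof. move=> /andP[H1 H2]; rewrite card_int //; lia. Qed.

Lemma card_Tc c : d.+1 <= c <= N -> #|Tc c| = d.+1.
Proof.
move=> /andP[H1 H2].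
have E : Tc c = [set u : 'I_N.+1 | (c - d.+1 <= u) && (u < c.+1)] :\ inord c.-1.
  apply/setP => u; rewrite !inE -val_eqE /= inordK; last by lia.
  by apply/idP/idP => H0; lia.
rewrite E; have := cardsD1 (inord c.-1 : 'I_N.+1)
  [set u : 'I_N.+1 | (c - d.+1 <= u) && (u < c.+1)].
rewrite card_int; [|lia|lia]; rewrite inE inordK; last by lia.
have -> : (c - d.+1 <= c.-1 < c.+1) = true by apply/idP; lia.
move=> HH; rewrite add1n in HH; apply: succn_inj; rewrite -HH; lia.
Qed.

Record inv (X : {set {set 'I_N.+1}}) (m : nat) : Prop := Inv {
  inv0 : forall t, t \in X -> t != finset.set0 /\ #|t| <= d.+1;
  inv1 : forall t u, t \in X -> u \in t -> u < m;
  inv2 : forall t u v, t \in X -> u \in t -> v \in t -> u <= v + d.+1;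
  inv3 : sig m \in X;
  inv4 : forall u : 'I_N.+1, u < m -> [set u] \in X;
  inv5 : d = 1 -> forall t u v, t \in X -> u \in t -> v \in t ->
           v = u.+1 :> nat -> u = 0 :> nat \/ v = m.-1 :> nat;
  inv6 : forall c, d.+2 <= c < m -> Tc c \in X;
  inv7 : simplicial_complex X;
  inv8 : homeomorphic (geom_realization X) (sphere d) }.

Lemma inv_base : inv (X0 aa) d.+2.
Proof.
have Hin : forall t u, t \in X0 aa -> u \in t -> u < d.+2.
  move=> t u; rewrite inE => /andP[_ /proper_sub /fintype.subsetP H] /H.
  by rewrite S0E.
split.
- move=> t; rewrite inE => /andP[tn /proper_card]; rewrite card_S0 => H; split => //.
- exact: Hin.
- move=> t u v Ht /(Hin _ _ Ht) Hu /(Hin _ _ Ht) Hv; lia.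
- rewrite inE properEcard card_S0 card_sig; last by apply/andP; split; lia.
  rewrite ltnSn andbT; apply/andP; split.
    apply/set0Pn; exists (inord 1); rewrite inE inordK; lia.
  by apply/fintype.subsetP => u; rewrite inE S0E => /andP[_ H].
- move=> u Hu; rewrite inE properEcard card_S0 cards1 /= andbT; apply/andP; split.
    by apply/set0Pn; exists u; rewrite inE.
  by apply/fintype.subsetP => v; rewrite inE S0E => /eqP ->.
- move=> d1 t u v Ht /(Hin _ _ Ht) Hu /(Hin _ _ Ht) Hv E; lia.
- by move=> c; lia.
- exact: X0_simplicial.
- exact: base_homeo aa_inj.
Qed.

Lemma inv_step X m : inv X m -> m <= N -> d.+2 <= m ->
  inv (stellar X (sig m) (inord m)) m.+1.
Proof.
move=> [I0 I1 I2 I3 I4 I5 I6 I7 I8] mN dm.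
set w : 'I_N.+1 := inord m.
have wv : (w : nat) = m by rewrite /w inordK //; lia.
have cs : #|sig m| = d.+1 by apply: card_sig; lia.
have Hmax : forall t, t \in X -> sig m \subset t -> t = sig m.
  move=> t Ht st; apply/eqP; rewrite eq_sym eqEcard st /= cs; exact: (I0 t Ht).2.
have Hcard : 1 < #|sig m| by rewrite cs; lia.
have Hw : forall t, t \in X -> w \notin t.
  by move=> t Ht; apply/negP => /(I1 _ _ Ht); rewrite wv ltnn.
have sigP : forall u : 'I_N.+1, (u \in sig m) = (m - d.+1 <= u < m) by move=> u; rewrite inE.
have Hnew : forall (r : {set 'I_N.+1}) (u : 'I_N.+1), r \subset sig m -> u \in w |: r -> m - d.+1 <= u <= m.
  move=> r u rs; rewrite in_setU1 => /orP [/eqP -> | /(fintype.subsetP rs)].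
    by rewrite wv; lia.
  by rewrite sigP; lia.
split.
- move=> t /stellarP [[Ht _]|[r [rs nrs] ->]]; first exact: I0.
  split; first by apply/set0Pn; exists w; rewrite setU11.
  rewrite cardsU1; have : #|r| < #|sig m| by apply: proper_card; rewrite finset.properEneq nrs rs.
  by rewrite cs => H; have := leq_b1 (w \notin r); lia.
- move=> t u /stellarP [[Ht _]|[r [rs nrs] ->]] Hu; first by have := I1 _ _ Ht Hu; lia.
  by have := Hnew r u rs Hu; lia.
- move=> t u v /stellarP [[Ht _]|[r [rs nrs] ->]] Hu Hv; first exact: I2 Ht Hu Hv.
  by have := Hnew r u rs Hu; have := Hnew r v rs Hv; lia.
- apply/stellarP; right; exists (sig m.+1 :\ w); last first.
    by rewrite finset.setD1K // inE wv; lia.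
  split.
    by apply/fintype.subsetP => u; rewrite !inE -val_eqE /= wv; lia.
  apply/negP => /eqP E.
  have : (inord (m - d.+1) : 'I_N.+1) \in sig m by rewrite sigP inordK; lia.
  by rewrite -E !inE -val_eqE /= !inordK ?wv; lia.
- move=> u Hu; apply/stellarP; case: (ltnP u m) => Hum.
    left; split; first exact: I4.
    by apply/negP => /eqP E; have := cs; rewrite -E cards1; lia.
  right; exists finset.set0.
    split; first exact: finset.sub0set.
    by apply/negP => /eqP E; have := cs; rewrite -E cards0; lia.
  by rewrite finset.setU0; congr [set _]; apply: val_inj; rewrite /= wv; lia.
- move=> d1 t u v /stellarP [[Ht nts]|[r [rs nrs] ->]] Hu Hv E.
    have [H|H] := I5 d1 _ _ _ Ht Hu Hv E; first by left.
    exfalso; move: nts; rewrite (Hmax t Ht) ?eqxx //.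
    apply/fintype.subsetP => x; rewrite sigP => Hx.
    have : (x : nat) = u \/ (x : nat) = v by lia.
    by case => /val_inj ->.
  move: Hv; rewrite in_setU1 => /orP [/eqP vw|vr].
    by right; rewrite vw wv.
  have vs : v \in sig m := fintype.subsetP rs v vr.
  have ur : u \in r.
    move: Hu; rewrite in_setU1 => /orP [/eqP uw|//].
    by move: vs E; rewrite sigP uw wv; lia.
  have us : u \in sig m := fintype.subsetP rs u ur.
  exfalso; move: nrs; rewrite finset.eqEsubset rs /=; apply/negP/negPn.
  apply/fintype.subsetP => x; rewrite sigP => Hx.
  move: us vs; rewrite !sigP => us vs.
  have : (x : nat) = u \/ (x : nat) = v by lia.
  by case => /val_inj ->.
- move=> c /andP[c1 c2]; apply/stellarP; case: (ltnP c m) => Hcm.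
    left; split; first by apply: I6; lia.
    apply/negP => /eqP E.
    have : (inord (c - d.+1) : 'I_N.+1) \in Tc c by rewrite inE inordK; lia.
    by rewrite E sigP inordK; lia.
  have cm : c = m by lia.
  rewrite cm; right; exists (Tc m :\ w); last first.
    by rewrite finset.setD1K // inE wv; lia.
  split.
    by apply/fintype.subsetP => u; rewrite !inE -val_eqE /= wv; lia.
  apply/negP => /eqP E.
  have : (inord m.-1 : 'I_N.+1) \in sig m by rewrite sigP inordK; lia.
  by rewrite -E !inE -val_eqE /= !inordK ?wv; lia.
- exact: stellar_simplicial I3 Hmax I7.
- exact: homeo_trans (stellar_homeo I3 Hmax Hcard Hw) I8.
Qed.

Lemma inv_stk j : d.+2 + j <= N.+1 -> inv (stk j) (d.+2 + j).
Proof.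
elim: j => [|j IH] H; first by rewrite addn0; exact: inv_base.
rewrite /= addnS; apply: inv_step; [apply: IH | |]; lia.
Qed.

Definition Xf := stk (N.+1 - d.+2).
Lemma inv_Xf : inv Xf N.+1.
Proof.
have E : d.+2 + (N.+1 - d.+2) = N.+1 by lia.
by rewrite /Xf -{2}E; apply: inv_stk; lia.
Qed.

Lemma vertices_Xf : #|vertices Xf| = N.+1.
Proof.
have -> : vertices Xf = [set: 'I_N.+1]%SET.
  apply/setP => u; rewrite !inE; apply: (inv4 inv_Xf); exact: ltn_ord.
by rewrite cardsT card_ord.
Qed.

Definition Wv (v : 'I_N.+1) : {set 'I_N.+1} :=
  [set u : 'I_N.+1 | (v - d.+1 <= u) && (u < v + d.+2)].

Lemma card_Wv v : #|Wv v| <= (d + d).+3.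
Proof. apply: (leq_trans (@card_int_le N.+1 (v - d.+1) (v + d.+2) _)); lia. Qed.

Lemma sub_Wv t v : t \in Xf -> v \in t -> t \subset Wv v.
Proof.
move=> Ht vt; apply/fintype.subsetP => u ut; rewrite inE.
have := inv2 inv_Xf Ht ut vt; have := inv2 inv_Xf Ht vt ut; lia.
Qed.

Lemma Delta_Xf : Delta Xf <= 2 ^ (d + d).+3.
Proof.
apply/bigmax_leqP => i _; apply/bigmax_leqP => j _.
apply/bigmax_leqP => s; rewrite inE => /andP[Hs _].
have [v vs] : exists v, v \in s by apply/set0Pn; exact: (inv0 inv_Xf Hs).1.
apply: leq_trans (_ : #|powerset (Wv v)| <= _).
  apply: subset_leq_card; apply/fintype.subsetP => t; rewrite !inE => /andP[/andP[Ht _] st].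
  by apply: sub_Wv Ht _; exact: (fintype.subsetP st).
by rewrite card_powerset leq_pexp2l // card_Wv.
Qed.

Lemma Delta01_Xf : Delta_ij Xf 0 1 <= (d + d).+2.
Proof.
apply/bigmax_leqP => s; rewrite inE => /andP[Hs /cards1P [v ->]].
apply: leq_trans (_ : #|[set [set v; u] | u in Wv v :\ v]| <= _).
  apply: subset_leq_card; apply/fintype.subsetP => t.
  rewrite !inE => /andP[/andP[Ht /cards2P [x [y [xy E]]]] vt].
  rewrite finset.sub1set in vt.
  have tW := sub_Wv Ht vt.
  move: vt tW; rewrite E !inE => /orP [/eqP vx|/eqP vy] tW; subst.
    apply: imset_f; rewrite !inE eq_sym xy /=.
    by have := fintype.subsetP tW y; rewrite !inE eqxx orbT => /(_ isT).
  rewrite finset.setUC; apply: imset_f; rewrite !inE xy /=.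
  by have := fintype.subsetP tW x; rewrite !inE eqxx => /(_ isT).
apply: leq_trans (leq_imset_card _ _) _.
have := card_Wv v; have := cardsD1 v (Wv v).
have -> : v \in Wv v by rewrite inE; lia.
lia.
Qed.

Lemma Tc_skel c : d.+2 <= c <= N -> Tc c \in skel Xf d.
Proof.
move=> H; rewrite inE (inv6 inv_Xf) /= ?card_Tc //; lia.
Qed.

Lemma Tc_disj c c' : d.+2 <= c -> c + d.+1 < c' -> [disjoint Tc c & Tc c'].
Proof.
move=> H1 H2; rewrite -finset.setI_eq0; apply/eqP/setP => u; rewrite !inE.
by apply/negbTE; lia.
Qed.

Lemma Tc_nonadj_aux c c' x y : d.+2 <= c -> c' <= N ->
  (d = 1 -> c' = c + 3 \/ c + 6 <= c') -> (d != 1 -> c + (d + d).+3 <= c') ->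
  x \in Tc c -> y \in Tc c' -> [set x; y] \in Xf -> False.
Proof.
move=> H1 H2 H3 H4 xT yT H.
have xin : x \in [set x; y] by rewrite !inE eqxx.
have yin : y \in [set x; y] by rewrite !inE eqxx orbT.
have h1 := inv2 inv_Xf H xin yin.
have h2 := inv2 inv_Xf H yin xin.
have h5 := fun d1 => inv5 inv_Xf d1 H xin yin.
move: xT yT; rewrite !inE => xT yT.
case: (eqVneq d 1) => [d1|dn1].
  have := h5 d1; have := H3 d1; lia.
have := H4 dn1; lia.
Qed.

Lemma Tc_nonadj c c' : d.+2 <= c -> c' <= N ->
  (d = 1 -> c' = c + 3 \/ c + 6 <= c') -> (d != 1 -> c + (d + d).+3 <= c') ->
  nonadjacent Xf (Tc c) (Tc c') /\ nonadjacent Xf (Tc c') (Tc c).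
Proof.
move=> H1 H2 H3 H4; split => x y xT yT; apply/negP; rewrite inE => /andP[H _].
  exact: Tc_nonadj_aux H1 H2 H3 H4 xT yT H.
by rewrite finset.setUC in H; exact: Tc_nonadj_aux H1 H2 H3 H4 yT xT H.
Qed.

End Stack.

Lemma main_constr d k : 0 < d -> 0 < k ->
  exists (V : finType) (X : {set {set V}}),
    [/\ triangulation_of_sphere d X, Delta_ij X 0 1 <= (d + d).+2,
        Delta X <= 2 ^ (d + d).+3,
        #|vertices X| = (d ^ 2 + d + 1) * k + (d + 2) ^ 2 &
        exists t : 'I_k -> {set V},
          (forall i, t i \in skel X d) /\
          (forall i j, i != j -> [disjoint t i & t j] /\ nonadjacent X (t i) (t j))].
Proof.
move=> Hd Hk.
set n := (d ^ 2 + d + 1) * k + (d + 2) ^ 2.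
set N := n.-1.
have nN : N.+1 = n by rewrite /N prednK // /n; nia.
have HdN : d.+2 <= N.+1 by rewrite nN /n; nia.
exists 'I_N.+1, (Xf HdN).
set p := if d == 1 then 3 else (d + d).+3.
set c := fun i : 'I_k => d.+2 + p * i.
have Hb : forall i : 'I_k, d.+2 <= c i <= N.
  move=> i; have := ltn_ord i; rewrite /c /p /N /n; case: eqP => [->|/eqP dn1] H; first by lia.
  nia.
have Hc : forall i j : 'I_k, i < j ->
    (d = 1 -> c j = c i + 3 \/ c i + 6 <= c j) /\ (d != 1 -> c i + (d + d).+3 <= c j).
  move=> i j ij; rewrite /c /p; split => [d1|dn1].
    by rewrite d1 /=; lia.
  by rewrite (negbTE dn1); nia.
have I := inv_Xf Hd HdN.
split.
- by split; [exact: inv7 I | exact: inv8 I].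
- exact: Delta01_Xf.
- exact: Delta_Xf.
- by rewrite vertices_Xf.
- exists (fun i => Tc d N (c i)); split.
    by move=> i; apply: Tc_skel.
  move=> i j nij; case: (ltngtP i j) => [ij|ji|E].
  + have [H1 H2] := Hc _ _ ij.
    have [b1 b2] := andP (Hb i); have [b3 b4] := andP (Hb j).
    split; first by apply: Tc_disj => //; case: (eqVneq d 1) => [d1|dn1]; [have := H1 d1 | have := H2 dn1]; lia.
    exact: (Tc_nonadj Hd HdN b1 b4 H1 H2).1.
  + have [H1 H2] := Hc _ _ ji.
    have [b1 b2] := andP (Hb j); have [b3 b4] := andP (Hb i).
    split.
      rewrite disjoint_sym; apply: Tc_disj => //; case: (eqVneq d 1) => [d1|dn1]; [have := H1 d1 | have := H2 dn1]; lia.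
    exact: (Tc_nonadj Hd HdN b1 b4 H1 H2).2.
  + by move: nij; rewrite (val_inj E) eqxx.
Qed.

Theorem lemma9 :
  (forall d k : nat, 0 < d -> 0 < k ->
     exists (V : finType) (X : {set {set V}}),
       [/\ triangulation_of_sphere d X,
           Delta_ij X 0 1 <= d.+1 * (d ^ 2 + d + 2),
           #|vertices X| = (d ^ 2 + d + 1) * k + (d + 2) ^ 2 &
           exists t : 'I_k -> {set V},
             (forall i, t i \in skel X d) /\
             (forall i j, i != j -> [disjoint t i & t j] /\ nonadjacent X (t i) (t j))])
  /\
  (forall d : nat, 0 < d ->
     exists L : nat, forall k : nat, 0 < k ->
       exists (V : finType) (X : {set {set V}}),
         [/\ triangulation_of_sphere d X,
             Delta X <= L,
             #|vertices X| <= L * k &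
             exists t : 'I_k -> {set V},
               (forall i, t i \in skel X d) /\
               (forall i j, i != j -> [disjoint t i & t j] /\ nonadjacent X (t i) (t j))]).
Proof.
split.
- move=> d k Hd Hk.
  have [V [X [H1 H2 H3 H4 H5]]] := main_constr Hd Hk.
  exists V, X; split => //.
  by apply: leq_trans H2 _; nia.
- move=> d Hd; exists ((d ^ 2 + d + 1) + (d + 2) ^ 2 + 2 ^ (d + d).+3) => k Hk.
  have [V [X [H1 H2 H3 H4 H5]]] := main_constr Hd Hk.
  exists V, X; split => //.
    by apply: leq_trans H3 _; rewrite leq_addl.
  by rewrite H4; nia.
Qed.
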